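(* Let $\alpha$ be a composition, $w\in CRHW_n$ with $w(\alpha)=\beta\ne0$, and let $\tau=\tau_w$. Then for every $j\ge2$ the entries of $\tau$ in column $j$ strictly decrease from top to bottom.
   Context: A composition is a finite sequence $\alpha=(\alpha_1,\dots,\alpha_k)$ of positive integers, with diagram the boxes $(i,j)$, $1\le i\le k$, $1\le j\le\alpha_i$ (rows top to bottom, columns left to right). Box-adding operators: $\mathfrak t_1(\alpha)=(1,\alpha_1,\dots,\alpha_k)$ (a new row added on top); for $i\ge2$, $\mathfrak t_i(\alpha)$ increases the leftmost part of $\alpha$ equal to $i-1$ by $1$ (adding a box in column $i$ of that row), and is $0$ if there is no such part; $\mathfrak t_i(0)=0$. A word $w=\mathfrak t_{i_1}\cdots\mathfrak t_{i_n}$ acts by $w(\alpha)=\mathfrak t_{i_1}(\cdots\mathfrak t_{i_n}(\alpha))$. It is a reverse hookword if $i_1\le\cdots\le i_{k+1}>i_{k+2}>\cdots>i_n$ for some $0\le k\le n-1$, connected if $\{i_1,\dots,i_n\}$ is a set of consecutive integers; $CRHW_n$ is the set of connected reverse hookwords of length $n$. If $w(\alpha)=\beta\ne0$, applying $\mathfrak t_{i_n},\dots,\mathfrak t_{i_1}$ successively adds one box at each step (the box added by $\mathfrak t_{i_m}$ lies in column $i_m$; boxes already present are shifted down by one row whenever $\mathfrak t_1$ adds a new top row). The added boxes form the skew shape $\beta/\!\!/\alpha$ (the boxes of $\beta$ not in the copy of $\alpha$ occupying the bottom $\ell(\alpha)$ rows). $\tau_w$ is the filling of $\beta/\!\!/\alpha$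 in which the box added by $\mathfrak t_{i_m}$ has entry $m$. *)

(* Defs.v *)
From mathcomp Require Import all_boot.
Set Implicit Arguments. Unset Strict Implicit. Unset Printing Implicit Defensive.

(* A composition: a finite sequence of positive integers (row lengths, top to bottom). *)
Definition composition (a : seq nat) : bool := all (fun p => 0 < p) a.

(* The box-adding operator t_i; [None] plays the role of 0.
   t_1 adds a new row of length 1 on top; for i >= 2, t_i increments the
   leftmost part equal to i-1 (None if there is none).  t_0 is not an operator
   of the paper and is sent to None. *)
Definition tOp (i : nat) (a : seq nat) : option (seq nat) :=
  if i == 0 then None
  else if i == 1 then Some (1 :: a)
  else if (i.-1) \in a then Some (set_nth 0 a (index i.-1 a) i)
  else None.

(* A word w = t_{i_1} ... t_{i_n} is represented by the list [:: i_1; ...; i_n].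
   w(alpha) = t_{i_1}(...(t_{i_n}(alpha))). *)
Definition applyWord (w : seq nat) (a : seq nat) : option (seq nat) :=
  foldr (fun i acc => obind (tOp i) acc) (Some a) w.

Definition reverse_hookword (w : seq nat) : Prop :=
  exists2 k, k < size w &
    sorted leq (take k.+1 w) /\ sorted (fun x y => y < x) (drop k w).

Definition connected_word (w : seq nat) : Prop :=
  exists a b, forall x, (x \in w) = (a <= x <= b).

Definition CRHW (n : nat) (w : seq nat) : Prop :=
  [/\ size w = n, all (fun i => 0 < i) w, reverse_hookword w & connected_word w].

(* A box of the filling: (row, column, entry), rows and columns 1-based,
   rows counted from the top of the current diagram. *)
Definition box := (nat * nat * nat)%type.

(* One step: apply t_i with entry m to a state (current composition, boxes added
   so far).  t_1 shifts all previously added boxes down one row and adds the box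
   (1,1); t_i (i>=2) adds a box in column i of the leftmost row of length i-1. *)
Definition fillStep (mi : nat * nat) (st : option (seq nat * seq box))
  : option (seq nat * seq box) :=
  let: (m, i) := mi in
  match st with
  | None => None
  | Some (a, bs) =>
      match tOp i a with
      | None => None
      | Some a' =>
          if i == 1 then
            Some (a', (1, 1, m) :: [seq (b.1.1.+1, b.1.2, b.2) | b <- bs])
          else Some (a', ((index i.-1 a).+1, i, m) :: bs)
      end
  end.

(* Run t_{i_n}, ..., t_{i_1} successively; the box added by t_{i_m} gets entry m. *)
Definition fillRun (w : seq nat) (a : seq nat) : option (seq nat * seq box) :=
  foldr fillStep (Some (a, [::])) (zip (iota 1 (size w)) w).

(* tau_w : the list of boxes of beta // alpha with their entries ([::] if w(alpha)=0). *)
Definition tau (w : seq nat) (a : seq nat) : seq box :=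
  if fillRun w a is Some (_, bs) then bs else [::].

Example tau_ex : tau [:: 2; 1] [:: 1] = [:: (1, 2, 1); (1, 1, 2)].
Proof. by []. Qed.

(* Main.v *)
Require Import Defs.
From mathcomp Require Import all_boot.
From mathcomp Require Import zify.

Lemma before_index (s : seq nat) x q : q < index x s -> nth 0 s q != x.
Proof. by move=> h; have := before_find 0 h => /= ->. Qed.

Lemma run_inv a0 (l : seq (nat*nat)) (F : seq nat) a bs :
  sorted ltn (map fst l) ->
  (forall pre x post, l = pre ++ x :: post -> x.2.+1 \in map snd post ->
      x.2.+1 \in F ++ map snd pre -> False) ->
  foldr fillStep (Some (a0, [::])) l = Some (a, bs) ->
  [/\ (forall r j m, (r,j,m) \in bs -> (m,j) \in l),
      (forall r j m, (r,j,m) \in bs -> 2 <= j -> j \in F -> forall q, q < r -> nth 0 a q != j.-1) &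
      (forall r1 r2 j m1 m2, (r1,j,m1) \in bs -> (r2,j,m2) \in bs -> 2 <= j -> r1 < r2 -> m2 < m1)].
Proof.
elim: l F a bs => [|[m i] l IH] F a bs /= Hs Hp.
  by case=> _ <-; split.
have Hs' := path_sorted Hs.
have Hmin : all (ltn m) (map fst l) by exact: order_path_min ltn_trans Hs.
have Hmin' : forall m' j, (m', j) \in l -> m < m'.
  by move=> m' j hin; move/allP: Hmin; apply; apply/mapP; exists (m', j).
have Hsnd : forall m' j, (m', j) \in l -> j \in map snd l.
  by move=> m' j hin; apply/mapP; exists (m', j).
case E: (foldr fillStep _ l) => [[a1 bs1]|] //.
have Hp' : forall pre x post, l = pre ++ x :: post -> x.2.+1 \in map snd post ->
      x.2.+1 \in (i :: F) ++ map snd pre -> False.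
  move=> pre x post e h1 h2; apply: (Hp ((m,i)::pre) x post _ h1); first by rewrite e.
  move: h2; rewrite /= !mem_cat !in_cons.
  by rewrite mem_cat; case: (x.2.+1 == i); case: (x.2.+1 \in F); case: (x.2.+1 \in map snd pre).
have [B1 B2 B3] := IH (i :: F) a1 bs1 Hs' Hp' E.
have P0 : forall j, i.+1 = j -> j \in map snd l -> j \in F -> False.
  by move=> j ej h1 h2; apply: (Hp [::] (m,i) l) => //=; rewrite ej // cats0.
rewrite /tOp.
case: (i =P 0) => [->//|/eqP i0].
case: (i =P 1) => [ei1 | /eqP i1].
  rewrite ei1.
  case=> <- <-; split.
  - move=> r j m'; rewrite in_cons => /orP [/eqP [_ -> ->]|/mapP [[[r0 j0] m0] h [_ -> ->]]].
      by rewrite in_cons eqxx.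
    by rewrite in_cons (B1 _ _ _ h) orbT.
  - move=> r j m'; rewrite in_cons => /orP [/eqP [_ -> _]//|/mapP [[[r0 j0] m0] h [-> ej _]]].
    subst j0.
    move=> j2 jF [|q] /=; last by rewrite ltnS => hq; apply: B2 h j2 _ q hq; rewrite in_cons jF orbT.
    move=> _; apply/eqP=> e; apply: (P0 j) => //; last exact: Hsnd (B1 _ _ _ h).
    by rewrite ei1; move: e j2; clear h jF; case: j => [|[|[|j]]].
  - move=> r1 r2 j m1 m2; rewrite !in_cons.
    move=> /orP [/eqP [_ -> _]//|/mapP [[[r0 j0] m0] h [-> ej ->]]].
    move=> /orP [/eqP [_ -> _]//|/mapP [[[r3 j3] m3] h' [-> e ->]]].
    subst j0 j3.
    by move=> j2; rewrite ltnS; apply: B3 h h' j2.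
have i2 : 2 <= i by move: i0 i1; clear; case: i => [|[|]].
case: ifP => // hin [<- <-].
set idx := index i.-1 a1.
have Hidx : nth 0 a1 idx = i.-1 by exact: nth_index.
split.
- move=> r j m'; rewrite !in_cons => /orP [/eqP [_ -> ->]|h]; first by rewrite eqxx.
  by rewrite (B1 _ _ _ h) orbT.
- move=> r j m'; rewrite in_cons => /orP [/eqP [-> -> _]|h] j2 jF q hq; rewrite nth_set_nth /=.
    case: ifP => [_|/negbT nq]; idtac.
    lia.
    by apply: before_index; rewrite /idx ltn_neqAle nq -ltnS hq.
  case: ifP => [_|_]; last by apply: B2 h j2 _ q hq; rewrite in_cons jF orbT.
  apply/eqP=> e; apply: (P0 j) => //; last exact: Hsnd (B1 _ _ _ h).
  by rewrite e; move: j2; clear; case: j => [|[|j]].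
- have key : forall r m', (r, i, m') \in bs1 -> r <= idx.
    move=> r m' h; rewrite leqNgt; apply/negP=> hr.
    by move/eqP: (B2 _ _ _ h i2 (mem_head _ _) _ hr); apply.
  move=> r1 r2 j m1 m2; rewrite !in_cons.
  move=> /orP [/eqP e1|h1] /orP [/eqP e2|h2] j2 hr.
  + by move: e1 e2 hr => [-> _ _] [-> _ _]; rewrite ltnn.
  + move: e1 hr => [-> ej _]; subst j; have := key _ _ h2; lia.
  + move: e2 => [_ ej ->]; subst j; exact: Hmin' (B1 _ _ _ h1).
  + exact: B3 h1 h2 j2 hr.
Qed.

Lemma rhw_nopat w u c v : reverse_hookword w -> w = u ++ c :: v ->
  c.+1 \in v -> c.+1 \in u -> False.
Proof.
move=> [k hk [Hinc Hdec]] ew hv hu.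
set p := size u.
have hy : index c.+1 u < p by rewrite /p index_mem.
have Ny : nth 0 w (index c.+1 u) = c.+1 by rewrite ew nth_cat hy nth_index.
have Np : nth 0 w p = c by rewrite ew nth_cat ltnn subnn.
set z := index c.+1 v.
have hz : z < size v by rewrite /z index_mem.
have Nz : nth 0 w (p + z.+1) = c.+1.
  by rewrite ew nth_cat ltnNge leq_addr /= addKn /= nth_index.
have sw : size w = p + (size v).+1 by rewrite ew size_cat.
case: (leqP p k) => hpk.
  have H := sorted_leq_nth leq_trans leqnn 0 Hinc.
  have := H (index c.+1 u) p _ _ (ltnW hy).
  rewrite !nth_take; [|lia|lia].
  rewrite Ny Np ltnn => h; suff : false by [].
  by apply: h; rewrite inE size_take; case: ifP => _; lia.
have tr : transitive (fun x y : nat => y < x).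
  by move=> x y1 y2 h1 h2; exact: ltn_trans h2 h1.
have H := sorted_ltn_nth tr 0 Hdec.
have m1 : (p - k) \in [pred n | n < size (drop k w)] by rewrite inE size_drop; lia.
have m2 : (p + z.+1 - k) \in [pred n | n < size (drop k w)] by rewrite inE size_drop; lia.
have lt : p - k < p + z.+1 - k by lia.
have := H _ _ m1 m2 lt.
rewrite /= !nth_drop (_ : k + (p + z.+1 - k) = p + z.+1); last lia.
rewrite (_ : k + (p - k) = p); last lia.
by rewrite Np Nz ltnNge leqnSn.
Qed.

Theorem mainTheorem7 (alpha beta w : seq nat) (n : nat) :
  composition alpha -> CRHW n w -> applyWord w alpha = Some beta ->
  forall (j r1 r2 m1 m2 : nat), 2 <= j ->
    (r1, j, m1) \in tau w alpha -> (r2, j, m2) \in tau w alpha ->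
    r1 < r2 -> m2 < m1.
Proof.
move=> _ [_ _ Hrw _] _ j r1 r2 m1 m2 j2.
rewrite /tau /fillRun.
case E: (foldr _ _ _) => [[a bs]|] //.
set l := zip (iota 1 (size w)) w.
have hs : size (iota 1 (size w)) = size w by rewrite size_iota.
have Hs : sorted ltn (map fst l) by rewrite /l -/(unzip1 _) unzip1_zip ?hs // iota_ltn_sorted.
have Hw : map snd l = w by rewrite /l -/(unzip2 _) unzip2_zip ?hs.
have Hp : forall pre x post, l = pre ++ x :: post -> x.2.+1 \in map snd post ->
      x.2.+1 \in [::] ++ map snd pre -> False.
  move=> pre x post e h1 h2.
  apply: (@rhw_nopat w (map snd pre) x.2 (map snd post) Hrw) => //.
  by rewrite -Hw e map_cat.
have [_ _ B3] := @run_inv alpha l [::] a bs Hs Hp E.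
move=> h1 h2 hr; exact: B3 h1 h2 j2 hr.
Qed.
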